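(* Let $m,n\ge0$, $0\le k\le\min(m,n)$, and let $i,j$ be integers with $0\le i\le m$, $0\le j\le n$, $k\le i+j\le m+n-k$. Then $$\binom{m-k+j}{m-k}\,c_{m,\,n-k+i,\,i}(k,\ i+j-k)=\binom{m-k+j}{m-i}\,c_{m,n,k}(i,j).$$
   Context: Binomial coefficients $\binom{a}{b}$ equal $\frac{a!}{b!(a-b)!}$ when $0\le b\le a$ and $0$ otherwise. Let $e,f,h$ be the standard basis of $\mathfrak{sl}(2,\mathbb{C})$. $V(n)$ is the irreducible representation of highest weight $n$ with fixed highest weight vector $\phi_n$; $\{f^i\phi_n\}_{0\le i\le n}$ is a basis, $f^{n+1}\phi_n=0$. $\mathfrak{sl}(2)$ acts on $V(m)\otimes V(n)$ by $X(v\otimes w)=Xv\otimes w+v\otimes Xw$. For any $m,n\ge 0$ and $0\le k\le\min(m,n)$, $\phi_{m,n,k}=\sum_{l=0}^{k}(-1)^l\binom{m-l}{k-l}\binom{n-k+l}{l} f^l\phi_m\otimes f^{k-l}\phi_n\in V(m)\otimes V(n)$ (a highest weight vector of weight $m+n-2k$). The coordinates $c_{m,n,k}(i,j)$ are defined by $f^{p-k}\phi_{m,n,k}=\sum_{i+j=p,\,0\le i\le m,\,0\le j\le n} c_{m,n,k}(i,j)\, f^i\phi_m\otimes f^j\phi_n$ for $k\le p\le m+n-k$. *)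

(* Defs.v *)
From HB Require Import structures.
From mathcomp Require Import all_boot all_order all_algebra.
Set Implicit Arguments. Unset Strict Implicit. Unset Printing Implicit Defensive.
Import Order.TTheory GRing.Theory Num.Theory.
Local Open Scope ring_scope.

(* Model of V(m) (x) V(n): a vector is given by its coordinates v i j on the
   basis f^i phi_m (x) f^j phi_n (0 <= i <= m, 0 <= j <= n); coordinates
   outside this range are irrelevant (kept 0). All coordinates involved are
   integers, so we work over int (a subring of C). *)
Definition tvec := nat -> nat -> int.

(* action of f on V(m) (x) V(n):
   f (f^a phi_m (x) f^b phi_n) = f^(a+1) phi_m (x) f^b phi_n + f^a phi_m (x) f^(b+1) phi_n,
   with f^(m+1) phi_m = 0 and f^(n+1) phi_n = 0. *)
Definition fact (m n : nat) (v : tvec) : tvec := fun i j =>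
  if (i <= m)%N && (j <= n)%N then
    (if i is i'.+1 then v i' j else 0) + (if j is j'.+1 then v i j' else 0)
  else 0.

Definition phi_mnk (m n k : nat) : tvec := fun i j =>
  if [&& (i + j == k)%N, (i <= m)%N & (j <= n)%N] then
    (-1) ^+ i * ('C(m - i, k - i))%:Z * ('C(n - k + i, i))%:Z
  else 0.

Definition coord_c (m n k i j : nat) : int :=
  iter (i + j - k) (fact m n) (phi_mnk m n k) i j.

(* Main.v *)
Require Import Defs.
From HB Require Import structures.
From mathcomp Require Import all_boot all_order all_algebra.
From mathcomp Require Import ring.
From mathcomp Require Import zify.
Import Order.TTheory GRing.Theory Num.Theory.
Local Open Scope ring_scope.

Ltac nring := apply/eqP; rewrite -eqz_nat; apply/eqP; rewrite !PoszM; ring.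

Lemma binf a b : ('C(a+b,a) * (a`! * b`!) = (a+b)`!)%N.
Proof. by have := bin_fact (leq_addr b a); rewrite addKn. Qed.

Lemma key A B x y z : (A + y = B + x)%N ->
  ('C(A+y+z, A) * 'C(B+x,x) * 'C(y+z,y) = 'C(B+x+z,B) * 'C(A+y,y) * 'C(x+z,x))%N.
Proof.
move=> h.
have P0 : (0 < A`! * B`! * x`! * y`! * z`!)%N by rewrite !muln_gt0 !fact_gt0.
apply/eqP; rewrite -(eqn_pmul2r P0); apply/eqP.
transitivity ('C(A+(y+z),A) * (A`! * ('C(y+z,y)*(y`!*z`!))) * ('C(x+B,x)*(x`!*B`!)))%N.
  rewrite addnA (addnC x B). nring.
rewrite binf binf binf (addnC x B) addnA -h.
transitivity ('C(B+(x+z),B) * (B`! * ('C(x+z,x)*(x`!*z`!))) * ('C(y+A,y)*(y`!*A`!)))%N.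
  rewrite binf binf binf addnA (addnC y A) h. done.
rewrite addnA (addnC y A) h. nring.
Qed.

Definition w (m n k l : nat) : int :=
  if (l <= k)%N then (-1) ^+ l * ('C(m - l, k - l))%:Z * ('C(n - k + l, l))%:Z
  else 0.

Definition S (m n k t i : nat) : int :=
  \sum_(l < i.+1) w m n k l * ('C(t, i - l))%:Z.

Lemma S0 m n k i : S m n k 0 i = w m n k i.
Proof.
rewrite /S big_ord_recr /= subnn bin0 mulr1 big1 ?add0r // => l _.
by rewrite bin0n subn_eq0 leqNgt ltn_ord mulr0.
Qed.

Lemma S_t0 m n k t : S m n k t 0 = w m n k 0.
Proof. by rewrite /S big_ord1 /= bin0 mulr1. Qed.

Lemma S_big m n k t i : (k + t < i)%N -> S m n k t i = 0.
Proof.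
move=> h; rewrite /S big1 // => l _; rewrite /w.
case: ifP => hl; last by rewrite mul0r.
rewrite (@bin_small t) ?mulr0 //; lia.
Qed.

Lemma S_pascal m n k t i :
  S m n k t.+1 i.+1 = S m n k t i + S m n k t i.+1.
Proof.
rewrite /S big_ord_recr /= [X in _ = _ + X]big_ord_recr /= subnn !bin0.
rewrite addrA; congr (_ + _).
rewrite -big_split /=; apply: eq_bigr => l _.
have hl := ltn_ord l.
rewrite subSn // binS PoszD mulrDr addrC //.
Qed.

Lemma iterE m n k t i j :
  iter t (fact m n) (phi_mnk m n k) i j =
  if [&& (i <= m)%N, (j <= n)%N & (i + j == k + t)%N] then S m n k t i else 0.
Proof.
elim: t i j => [|t IH] i j.
  rewrite /= S0 /phi_mnk /w addn0.
  case: (i + j == k)%N / eqP => hij; last by rewrite !andbF.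
  by case: (i <= m)%N; case: (j <= n)%N => //=; rewrite ifT //; lia.
rewrite /= {1}/fact.
case hi: (i <= m)%N; case hj: (j <= n)%N => //=.
case: i hi => [|i] hi; case: j hj => [|j] hj.
- by rewrite add0r; case: eqP => //; lia.
- rewrite add0r IH /= (ltnW hj) /= !S_t0.
  by case: eqP => e; case: eqP => e' //; lia.
- rewrite addr0 IH (ltnW hi) /=.
  case: eqP => e; case: eqP => e' //; try lia.
  by rewrite S_pascal (@S_big m n k t i.+1) ?addr0 //; lia.
- rewrite !IH (ltnW hi) (ltnW hj) hi hj /=.
  case: eqP => e; case: eqP => e'; case: eqP => e'' //; try lia.
  by rewrite S_pascal.
Qed.

Lemma widen (F : nat -> int) a N : (a < N)%N ->
  \sum_(l < a.+1) F l = \sum_(l < N) (if (l <= a)%N then F l else 0).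
Proof.
move=> h; rewrite (big_ord_widen N F h) big_mkcond; apply: eq_bigr => l _.
by rewrite ltnS.
Qed.

Lemma natE m k i j l : (k <= m)%N -> (i <= m)%N -> (k <= i + j)%N ->
  (l <= k)%N -> (l <= i)%N ->
  ('C(m - k + j, m - k) * 'C(m - l, i - l) * 'C(j, k - l) =
   'C(m - k + j, m - i) * 'C(m - l, k - l) * 'C(i + j - k, i - l))%N.
Proof.
move=> hkm him hij hlk hli.
case: (leqP (k - l) j) => hj; last first.
  by rewrite (@bin_small j) // (@bin_small (i + j - k)) ?muln0 //; lia.
have := @key (m - k) (m - i) (i - l) (k - l) (j - (k - l)) ltac:(lia).
have e1 : (m - k + (k - l) + (j - (k - l)) = m - k + j)%N by lia.
have e4 : (m - i + (i - l) + (j - (k - l)) = m - k + j)%N by lia.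
have e2 : (m - k + (k - l) = m - l)%N by lia.
have e5 : (m - i + (i - l) = m - l)%N by lia.
have e3 : (k - l + (j - (k - l)) = j)%N by lia.
have e6 : (i - l + (j - (k - l)) = i + j - k)%N by lia.
rewrite e1 e4 e2 e5 e3 e6 => ->.
by [].
Qed.

Theorem proposition8p2 (m n k i j : nat) :
  (k <= minn m n)%N -> (i <= m)%N -> (j <= n)%N ->
  (k <= i + j)%N -> (i + j <= m + n - k)%N ->
  ('C(m - k + j, m - k))%:Z * coord_c m (n - k + i) i k (i + j - k)
  = ('C(m - k + j, m - i))%:Z * coord_c m n k i j.
Proof.
move=> hk hi hj h1 h2.
move: hk; rewrite leq_min => /andP [hkm hkn].
rewrite /coord_c !iterE.
rewrite ifT; last by apply/and3P; split; lia.
rewrite ifT; last by apply/and3P; split; lia.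
have -> : (k + (i + j - k) - i = j)%N by lia.
rewrite /S !mulr_sumr.
rewrite (widen (fun l => ('C(m - k + j, m - k))%:Z *
   (w m (n - k + i) i l * ('C(j, k - l))%:Z)) k (i + k).+1); last by lia.
rewrite (widen (fun l => ('C(m - k + j, m - i))%:Z *
   (w m n k l * ('C(i + j - k, i - l))%:Z)) i (i + k).+1); last by lia.
apply: eq_bigr => l _; rewrite /w.
case: (leqP l k) => hlk; case: (leqP l i) => hli //.
have -> : (n - k + i - i + l = n - k + l)%N by lia.
have E := congr1 Posz (@natE m k i j l hkm hi h1 hlk hli).
rewrite !PoszM in E.
transitivity ((-1) ^+ l * ('C(n - k + l, l))%:Z *
  (('C(m - k + j, m - k))%:Z * ('C(m - l, i - l))%:Z * ('C(j, k - l))%:Z)).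
  ring.
rewrite E; ring.
  by rewrite mul0r mulr0.
by rewrite mul0r mulr0.
Qed.
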